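(* Let $(S,\sqcup)$ be a left regular band and let $I$ be a $\lesssim$-ideal of $S$ that is relatively maximal with respect to not containing $d\in S$. If $a\in S$ and $a\notin I$, then there exists $i\in I$ such that $d\lesssim a\sqcup i$.
   Context: A left regular band is a set $S$ with a binary operation $\sqcup$ satisfying $a\sqcup(b\sqcup c)=(a\sqcup b)\sqcup c$, $a\sqcup a=a$, $a\sqcup b=(a\sqcup b)\sqcup a$. Write $a\lesssim b$ iff $b\sqcup a=b$ (a quasiorder). A $\lesssim$-ideal is a non-empty subset $I\subseteq S$ that is a down-set under $\lesssim$ and satisfies $i\sqcup j\in I$ for all $i,j\in I$. For $d\in S$, a $\lesssim$-ideal $I$ is relatively maximal with respect to not containing $d$ if $d\notin I$ and no $\lesssim$-ideal properly containing $I$ omits $d$. *)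

(* Defs.v *)
Definition is_LRB {S : Type} (op : S -> S -> S) : Prop :=
  (forall a b c, op a (op b c) = op (op a b) c) /\
  (forall a, op a a = a) /\
  (forall a b, op a b = op (op a b) a).

Definition lrb_le {S : Type} (op : S -> S -> S) (a b : S) : Prop := op b a = b.

Definition is_ideal {S : Type} (op : S -> S -> S) (I : S -> Prop) : Prop :=
  (exists x, I x) /\
  (forall a b, lrb_le op a b -> I b -> I a) /\
  (forall i j, I i -> I j -> I (op i j)).

Definition rel_max_not_containing {S : Type} (op : S -> S -> S)
    (I : S -> Prop) (d : S) : Prop :=
  is_ideal op I /\ ~ I d /\
  forall J : S -> Prop, is_ideal op J -> (forall x, I x -> J x) ->
    (exists x, J x /\ ~ I x) -> J d.

(* Main.v *)
Require Import Defs.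

Theorem lemma2p4 (S : Type) (op : S -> S -> S) (I : S -> Prop) (d a : S) :
  is_LRB op -> rel_max_not_containing op I d -> ~ I a ->
  exists i, I i /\ lrb_le op d (op a i).
Proof.
  intros [HA [HI HL]] [[[x0 Hx0] [Hdown Hjoin]] [Hnd Hmax]] Ha.
  unfold lrb_le in *.
  assert (Hxcx : forall x c, op x (op c x) = op x c).
  { intros x c. rewrite HA. symmetry. apply HL. }
  assert (Hext : forall x b c, op b x = b -> op (op b c) x = op b c).
  { intros x b c H. transitivity (op (op (op b x) c) x); [rewrite H; reflexivity|].
    now rewrite <- (HA b x c), <- HA, <- HA, Hxcx, HA, H. }
  assert (Hpre : forall y b c, op c y = c -> op (op b c) y = op b c).
  { intros y b c H. now rewrite <- HA, H. }
  set (J := fun x => exists i, I i /\ op (op a i) x = op a i).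
  assert (HJ : J d).
  { apply (Hmax J).
    - split; [|split].
      + exists x0. exists x0. split; auto; try now rewrite <- HA, HI.
      + intros u v Huv [i [Hi Hv]]. exists i. split; auto.
        transitivity (op (op (op a i) v) u); [rewrite Hv; reflexivity|].
        now rewrite <- HA, Huv, Hv.
      + intros u v [i [Hi Hu]] [j [Hj Hv]]. exists (op i j). split; auto.
        assert (E : op (op a i) j = op (op a i) (op a j)).
        { rewrite (HA (op a i) a j). now rewrite <- HL. }
        rewrite (HA a i j), E, (HA _ u v).
        rewrite (Hext u (op a i) (op a j) Hu). apply Hpre. exact Hv.
    - intros x Hx. exists x. split; auto; try now rewrite <- HA, HI.
    - exists a. split; auto. exists x0. split; auto; symmetry; apply HL. }
  destruct HJ as [i [Hi H]]. exists i. auto.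
Qed.
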